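(* Let $(x,y)$ be an $\mathbf{x}$-vertex of $S$ and let $x'$ be a vertex of $P_A$ adjacent to $x$ in $P_A$. Then there exists $y^*$ with $\operatorname{supp}(y^* )\subseteq\operatorname{supp}(y)$ such that $(x',y^* )$ is a vertex of $S$ adjacent to $(x,y)$ if and only if $(a_1x',a_2x')\in\operatorname{Band}_{\mathbf{x}}(y)$.
   Context: Let $A\in\mathbb{R}^{m_1\times n_1}$, $a_1,a_2\in\mathbb{R}^{1\times n_1}$, $b_1,b_2\in\mathbb{R}^{1\times n_2}$, $B\in\mathbb{R}^{m_2\times n_2}$, $c_A\in\mathbb{R}^{m_1}$, $c_B\in\mathbb{R}^{m_2}$, and scalars $c_a^1,c_a^2,c_b^1,c_b^2$. Consider the ($3$-sum) polyhedron $S=\{(x,y)\in\mathbb{R}^{n_1}\times\mathbb{R}^{n_2}: Ax=c_A,\ a_1x+b_1y=c_a^1+c_b^1,\ a_2x+b_2y=c_a^2+c_b^2,\ By=c_B,\ x,y\ge 0\}$, assumed simple (nondegenerate). Let $P_A=\{x: Ax=c_A, x\ge 0\}$. A vertex $(x,y)$ of $S$ is an $\mathbf{x}$-vertex if $x$ is a vertex of $P_A$. For such a vertex, $\operatorname{Band}_{\mathbf{x}}(y):=\{(c_a^1+c_b^1-b_1z,\ c_a^2+c_b^2-b_2z) : Bz=c_B,\ \operatorname{supp}(z)\subseteq\operatorname{supp}(y),\ z\ge 0\}\subseteq\mathbb{R}^2$, where $\operatorname{supp}$ denotes the set of indices of nonzero coordinates. *)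

(* Defs.v *)
From HB Require Import structures.
From mathcomp Require Import all_boot all_order all_algebra.
Set Implicit Arguments. Unset Strict Implicit. Unset Printing Implicit Defensive.
Import Order.TTheory GRing.Theory Num.Theory.
Local Open Scope ring_scope.

Section Poly.
Variable R : realFieldType.

Definition supp n (v : 'cV[R]_n) : {set 'I_n} := [set i | v i 0 != 0].

Definition nonneg n (v : 'cV[R]_n) : Prop := forall i, 0 <= v i 0.

Definition seg n (u v : 'cV[R]_n) (p : 'cV[R]_n) : Prop :=
  exists t : R, 0 <= t <= 1 /\ p = t *: u + (1 - t) *: v.

Definition is_vertex n (P : 'cV[R]_n -> Prop) (x : 'cV[R]_n) : Prop :=
  P x /\ forall y z (t : R), P y -> P z -> 0 < t < 1 ->
    x = t *: y + (1 - t) *: z -> y = z.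

(* adjacency: two distinct vertices whose segment is a face (extreme subset) of P *)
Definition adjacent n (P : 'cV[R]_n -> Prop) (u v : 'cV[R]_n) : Prop :=
  [/\ is_vertex P u, is_vertex P v, u <> v &
    forall p q (t : R), P p -> P q -> 0 < t < 1 ->
      seg u v (t *: p + (1 - t) *: q) -> seg u v p /\ seg u v q].

Definition PA m1 n1 (A : 'M[R]_(m1, n1)) (cA : 'cV[R]_m1) (x : 'cV[R]_n1) : Prop :=
  A *m x = cA /\ nonneg x.

Definition Mat3 m1 n1 m2 n2 (A : 'M[R]_(m1, n1)) (a1 a2 : 'rV[R]_n1)
  (b1 b2 : 'rV[R]_n2) (B : 'M[R]_(m2, n2)) : 'M[R]_(m1 + (1 + (1 + m2)), n1 + n2) :=
  col_mx (row_mx A 0) (col_mx (row_mx a1 b1) (col_mx (row_mx a2 b2) (row_mx 0 B))).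

(* the 3-sum polyhedron S, as a set of points col_mx x y in R^(n1+n2) *)
Definition S3 m1 n1 m2 n2 (A : 'M[R]_(m1, n1)) (a1 a2 : 'rV[R]_n1)
  (b1 b2 : 'rV[R]_n2) (B : 'M[R]_(m2, n2)) (cA : 'cV[R]_m1) (cB : 'cV[R]_m2)
  (ca1 ca2 cb1 cb2 : R) (v : 'cV[R]_(n1 + n2)) : Prop :=
  let x := usubmx v in let y := dsubmx v in
  [/\ A *m x = cA,
      a1 *m x + b1 *m y = (ca1 + cb1)%:M,
      a2 *m x + b2 *m y = (ca2 + cb2)%:M,
      B *m y = cB & nonneg v].

Definition std_nondegenerate m n (M : 'M[R]_(m, n)) (P : 'cV[R]_n -> Prop) : Prop :=
  forall v, is_vertex P v -> #|supp v| = \rank M.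

Definition is_xvertex m1 n1 n2 (S : 'cV[R]_(n1 + n2) -> Prop)
  (A : 'M[R]_(m1, n1)) (cA : 'cV[R]_m1) (x : 'cV[R]_n1) (y : 'cV[R]_n2) : Prop :=
  is_vertex S (col_mx x y) /\ is_vertex (PA A cA) x.

Definition Band m2 n2 (b1 b2 : 'rV[R]_n2) (B : 'M[R]_(m2, n2)) (cB : 'cV[R]_m2)
  (ca1 ca2 cb1 cb2 : R) (y : 'cV[R]_n2) (p : R * R) : Prop :=
  exists z : 'cV[R]_n2,
    [/\ B *m z = cB, supp z \subset supp y, nonneg z &
        p = (ca1 + cb1 - (b1 *m z) 0 0, ca2 + cb2 - (b2 *m z) 0 0)].

End Poly.

(* Main.v *)
Require Import Defs.
From mathcomp Require Import all_boot all_order all_algebra ring lra.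

Set Implicit Arguments. Unset Strict Implicit. Unset Printing Implicit Defensive.
Import Order.TTheory GRing.Theory Num.Theory.
Local Open Scope ring_scope.

Lemma nonneg_col (R : realFieldType) n1 n2 (x : 'cV[R]_n1) (y : 'cV[R]_n2) :
  nonneg (col_mx x y) <-> nonneg x /\ nonneg y.
Proof.
split.
- move=> H; split=> i; [have := H (lshift n2 i) | have := H (rshift n1 i)];
  by rewrite ?col_mxEu ?col_mxEd.
- move=> [Hx Hy] i; case: (split_ordP i) => k ->; by rewrite ?col_mxEu ?col_mxEd.
Qed.

Lemma S3_colE (R : realFieldType) (m1 n1 m2 n2 : nat)
  (A : 'M[R]_(m1, n1)) (a1 a2 : 'rV[R]_n1) (b1 b2 : 'rV[R]_n2)
  (B : 'M[R]_(m2, n2)) (cA : 'cV[R]_m1) (cB : 'cV[R]_m2) (ca1 ca2 cb1 cb2 : R)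
  (x : 'cV[R]_n1) (y : 'cV[R]_n2) :
  S3 A a1 a2 b1 b2 B cA cB ca1 ca2 cb1 cb2 (col_mx x y) <->
  [/\ A *m x = cA, a1 *m x + b1 *m y = (ca1 + cb1)%:M,
      a2 *m x + b2 *m y = (ca2 + cb2)%:M, B *m y = cB & nonneg x /\ nonneg y].
Proof.
rewrite /S3 col_mxKu col_mxKd; split.
- by case=> h1 h2 h3 h4 /nonneg_col h5.
- by case=> h1 h2 h3 h4 /nonneg_col h5.
Qed.

Lemma supp_comb (R : realFieldType) n (p q : 'cV[R]_n) (t : R) :
  nonneg p -> nonneg q -> 0 < t < 1 ->
  supp p \subset supp (t *: p + (1 - t) *: q).
Proof.
move=> Hp Hq /andP[t0 t1]; apply/subsetP=> i; rewrite !inE !mxE.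
apply: contra => /eqP H.
have h1 : 0 <= t * p i 0 by apply: mulr_ge0; [exact: ltW | exact: Hp].
have h2 : 0 <= (1 - t) * q i 0 by apply: mulr_ge0; [rewrite subr_ge0; exact: ltW | exact: Hq].
move: H => /eqP; rewrite paddr_eq0 // => /andP[/eqP h _].
move: h => /eqP; rewrite mulf_eq0 => /orP[/eqP t0'|//].
by move: t0; rewrite t0' ltxx.
Qed.

Lemma supp_comb' (R : realFieldType) n (p q : 'cV[R]_n) (t : R) :
  nonneg p -> nonneg q -> 0 < t < 1 ->
  supp q \subset supp (t *: p + (1 - t) *: q).
Proof.
move=> Hp Hq /andP[t0 t1].
have -> : t *: p + (1 - t) *: q = (1 - t) *: q + (1 - (1 - t)) *: p.
  by rewrite addrC opprB addrCA subrr addr0.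
apply: supp_comb => //; apply/andP; split; lra.
Qed.

Lemma supp_comb2 (R : realFieldType) n (p q : 'cV[R]_n) (t : R) :
  supp (t *: p + (1 - t) *: q) \subset supp p :|: supp q.
Proof.
apply/subsetP=> i; rewrite !inE !mxE; apply: contraR.
by rewrite negb_or !negbK => /andP[/eqP -> /eqP ->]; rewrite !mulr0 addr0.
Qed.

Lemma eps_exists (R : realFieldType) n (y d : 'cV[R]_n) :
  nonneg y -> supp d \subset supp y ->
  exists e : R, 0 < e /\ forall i, e * `|d i 0| <= y i 0.
Proof.
move=> Hy Hs.
set M := \sum_(i < n) `|d i 0| / y i 0.
have M0 : 0 <= M by apply: sumr_ge0 => i _; apply: divr_ge0 => //.
have M1 : 0 < 1 + M by lra.
exists (1 + M)^-1; split; first by rewrite invr_gt0.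
move=> i.
have [d0|dn0] := eqVneq (d i 0) 0; first by rewrite d0 normr0 mulr0.
have yn0 : y i 0 != 0 by move/subsetP: Hs => /(_ i); rewrite !inE; apply.
have yp : 0 < y i 0 by rewrite lt_def yn0 Hy.
have hM : `|d i 0| / y i 0 <= M.
  rewrite /M (bigD1 i) //=; rewrite lerDl; apply: sumr_ge0 => j _.
  by apply: divr_ge0.
have h1 : `|d i 0| <= M * y i 0 by rewrite -ler_pdivrMr.
have h2 : `|d i 0| <= (1 + M) * y i 0.
  by rewrite mulrDl mul1r; apply: (le_trans h1); rewrite lerDr; apply: ltW.
by rewrite ler_pdivrMl.
Qed.

Lemma S3_conv (R : realFieldType) (m1 n1 m2 n2 : nat)
  (A : 'M[R]_(m1, n1)) (a1 a2 : 'rV[R]_n1) (b1 b2 : 'rV[R]_n2)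
  (B : 'M[R]_(m2, n2)) (cA : 'cV[R]_m1) (cB : 'cV[R]_m2) (ca1 ca2 cb1 cb2 : R)
  (x x' : 'cV[R]_n1) (y y' : 'cV[R]_n2) (s : R) :
  S3 A a1 a2 b1 b2 B cA cB ca1 ca2 cb1 cb2 (col_mx x y) ->
  S3 A a1 a2 b1 b2 B cA cB ca1 ca2 cb1 cb2 (col_mx x' y') ->
  0 <= s <= 1 ->
  S3 A a1 a2 b1 b2 B cA cB ca1 ca2 cb1 cb2
     (col_mx (s *: x + (1 - s) *: x') (s *: y + (1 - s) *: y')).
Proof.
move=> /S3_colE [h1 h2 h3 h4 [h5 h6]] /S3_colE [k1 k2 k3 k4 [k5 k6]] /andP[s0 s1].
have E : forall k (c : 'M[R]_(k,1)), s *: c + (1 - s) *: c = c.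
  by move=> k c; rewrite -scalerDl addrC subrK scale1r.
apply/S3_colE; split.
- by rewrite mulmxDr -!scalemxAr h1 k1 E.
- rewrite !mulmxDr -!scalemxAr addrACA -!scalerDr h2 k2; exact: E.
- rewrite !mulmxDr -!scalemxAr addrACA -!scalerDr h3 k3; exact: E.
- by rewrite mulmxDr -!scalemxAr h4 k4 E.
- have s1' : 0 <= 1 - s by rewrite subr_ge0.
  split=> i; rewrite !mxE; apply: addr_ge0; apply: mulr_ge0 => //;
  by [apply: h5 | apply: k5 | apply: h6 | apply: k6].
Qed.

Lemma keyL (R : realFieldType) (m1 n1 m2 n2 : nat)
  (A : 'M[R]_(m1, n1)) (a1 a2 : 'rV[R]_n1) (b1 b2 : 'rV[R]_n2)
  (B : 'M[R]_(m2, n2)) (cA : 'cV[R]_m1) (cB : 'cV[R]_m2) (ca1 ca2 cb1 cb2 : R)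
  (x : 'cV[R]_n1) (y d : 'cV[R]_n2) :
  is_vertex (S3 A a1 a2 b1 b2 B cA cB ca1 ca2 cb1 cb2) (col_mx x y) ->
  supp d \subset supp y -> b1 *m d = 0 -> b2 *m d = 0 -> B *m d = 0 -> d = 0.
Proof.
move=> [Sxy ext] Hs hb1 hb2 hB.
have := Sxy => /S3_colE [h1 h2 h3 h4 [h5 h6]].
have [e [e0 He]] := eps_exists h6 Hs.
have Sy : forall f : R, (forall i, 0 <= y i 0 + f * d i 0) ->
    S3 A a1 a2 b1 b2 B cA cB ca1 ca2 cb1 cb2 (col_mx x (y + f *: d)).
  move=> f Hf; apply/S3_colE; split => //.
  - by rewrite mulmxDr -scalemxAr hb1 scaler0 addr0.
  - by rewrite mulmxDr -scalemxAr hb2 scaler0 addr0.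
  - by rewrite mulmxDr -scalemxAr hB scaler0 addr0.
  - by split=> // i; rewrite !mxE.
have Q : (forall f, f = e \/ f = - e -> forall i, 0 <= y i 0 + f * d i 0).
  move=> f Hf i; have := He i; have := ler_norm (d i 0);
  have := ler_norm (- d i 0); rewrite normrN.
  by case: Hf => ->; nra.
have H1 := Sy e (Q e (or_introl erefl)).
have H2 := Sy (- e) (Q (-e) (or_intror erefl)).
have t01 : 0 < (2^-1 : R) < 1 by apply/andP; split; lra.
have := ext _ _ _ H1 H2 t01.
have E : col_mx x y =
   2^-1 *: col_mx x (y + e *: d) + (1 - 2^-1) *: col_mx x (y + - e *: d).
  rewrite !scale_col_mx add_col_mx; congr col_mx; apply/matrixP=> i j; rewrite !mxE; by field.
move=> Himp; have := Himp E; move/eq_col_mx => [_ /matrixP Hm]; apply/matrixP=> i j.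
have := Hm i j; rewrite !mxE (ord1 j) => Hij; nra.
Qed.

Lemma keyU (R : realFieldType) (m1 n1 m2 n2 : nat)
  (A : 'M[R]_(m1, n1)) (a1 a2 : 'rV[R]_n1) (b1 b2 : 'rV[R]_n2)
  (B : 'M[R]_(m2, n2)) (cA : 'cV[R]_m1) (cB : 'cV[R]_m2) (ca1 ca2 cb1 cb2 : R)
  (x px : 'cV[R]_n1) (y p q : 'cV[R]_n2) :
  is_vertex (S3 A a1 a2 b1 b2 B cA cB ca1 ca2 cb1 cb2) (col_mx x y) ->
  S3 A a1 a2 b1 b2 B cA cB ca1 ca2 cb1 cb2 (col_mx px p) ->
  S3 A a1 a2 b1 b2 B cA cB ca1 ca2 cb1 cb2 (col_mx px q) ->
  supp p \subset supp y -> supp q \subset supp y -> p = q.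
Proof.
move=> V /S3_colE [h1 h2 h3 h4 _] /S3_colE [k1 k2 k3 k4 _] sp sq.
apply/eqP; rewrite -subr_eq0; apply/eqP.
apply: (keyL V).
- apply/subsetP=> i; rewrite !inE !mxE => H.
  have [p0|pn0] := eqVneq (p i 0) 0.
  + have [q0|qn0] := eqVneq (q i 0) 0; first by move: H; rewrite p0 q0 subrr eqxx.
    by move/subsetP: sq => /(_ i); rewrite !inE; apply.
  + by move/subsetP: sp => /(_ i); rewrite !inE; apply.
- by rewrite mulmxBr; apply/eqP; rewrite subr_eq0; apply/eqP;
     apply: (addrI (a1 *m px)); rewrite h2 k2.
- by rewrite mulmxBr; apply/eqP; rewrite subr_eq0; apply/eqP;
     apply: (addrI (a2 *m px)); rewrite h3 k3.
- by rewrite mulmxBr h4 k4 subrr.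
Qed.

Unset Implicit Arguments.

Theorem lemma6 (R : realFieldType) (m1 n1 m2 n2 : nat)
  (A : 'M[R]_(m1, n1)) (a1 a2 : 'rV[R]_n1) (b1 b2 : 'rV[R]_n2)
  (B : 'M[R]_(m2, n2)) (cA : 'cV[R]_m1) (cB : 'cV[R]_m2) (ca1 ca2 cb1 cb2 : R)
  (Hsimple : std_nondegenerate (Mat3 A a1 a2 b1 b2 B)
               (S3 A a1 a2 b1 b2 B cA cB ca1 ca2 cb1 cb2))
  (x : 'cV[R]_n1) (y : 'cV[R]_n2)
  (Hxv : is_xvertex (S3 A a1 a2 b1 b2 B cA cB ca1 ca2 cb1 cb2) A cA x y)
  (x' : 'cV[R]_n1) (Hadj : adjacent (PA A cA) x x') :
  (exists ystar : 'cV[R]_n2,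
      supp ystar \subset supp y /\
      adjacent (S3 A a1 a2 b1 b2 B cA cB ca1 ca2 cb1 cb2)
               (col_mx x y) (col_mx x' ystar))
  <-> Band b1 b2 B cB ca1 ca2 cb1 cb2 y ((a1 *m x') 0 0, (a2 *m x') 0 0).
Proof.
split.
- move=> [ys [Hs [_ [/S3_colE [h1 h2 h3 h4 [h5 h6]] _] _ _]]].
  exists ys; split => //.
  have e1 := congr1 (fun M : 'M[R]_1 => M 0 0) h2.
  have e2 := congr1 (fun M : 'M[R]_1 => M 0 0) h3.
  move: e1 e2 => /=; rewrite !mxE /= !mulr1n => <- <-.
  by congr pair; rewrite addrK.
- move=> [z [hBz hsz hnz hp]].
  case: hp => hp1 hp2.
  case: Hxv => VS [PAx extx].
  case: Hadj => _ [[Ax' nx'] extx'] neq face.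
  have e1 : a1 *m x' + b1 *m z = (ca1 + cb1)%:M.
    by apply/matrixP=> i j; rewrite !ord1 [LHS]mxE [RHS]mxE /= mulr1n hp1 subrK.
  have e2 : a2 *m x' + b2 *m z = (ca2 + cb2)%:M.
    by apply/matrixP=> i j; rewrite !ord1 [LHS]mxE [RHS]mxE /= mulr1n hp2 subrK.
  have Sxy := VS.1.
  have Sx'z : S3 A a1 a2 b1 b2 B cA cB ca1 ca2 cb1 cb2 (col_mx x' z).
    have := Sxy => /S3_colE [h1 h2 h3 h4 [h5 h6]].
    by apply/S3_colE; split.
  have syz : supp y :|: supp z \subset supp y by rewrite subUset subxx hsz.
  exists z; split => //; split => //.
  + split => // p q t Sp Sq t01 E.
    rewrite -[p]vsubmxK -[q]vsubmxK in Sp Sq E *.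
    move: (usubmx p) (dsubmx p) (usubmx q) (dsubmx q) Sp Sq E => px py qx qy Sp Sq E.
    rewrite !scale_col_mx add_col_mx in E; case/eq_col_mx: E => Ex Ey.
    have := Sp => /S3_colE [p1 _ _ _ [pnx pny]].
    have := Sq => /S3_colE [q1 _ _ _ [qnx qny]].
    have pq : px = qx := extx' px qx t (conj p1 pnx) (conj q1 qnx) t01 Ex.
    subst qx.
    have sp : supp py \subset supp y.
      by apply: subset_trans hsz; rewrite Ey; apply: supp_comb.
    have sq : supp qy \subset supp y.
      by apply: subset_trans hsz; rewrite Ey; apply: supp_comb'.
    by rewrite (keyU VS Sp Sq sp sq).
  + by move/eq_col_mx => [/neq].
  + move=> p q t Sp Sq t01 [s [s01 E]].
    rewrite -[p]vsubmxK -[q]vsubmxK in Sp Sq E *.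
    move: (usubmx p) (dsubmx p) (usubmx q) (dsubmx q) Sp Sq E => px py qx qy Sp Sq E.
    rewrite !scale_col_mx !add_col_mx in E; case/eq_col_mx: E => Ex Ey.
    have := Sp => /S3_colE [p1 _ _ _ [pnx pny]].
    have := Sq => /S3_colE [q1 _ _ _ [qnx qny]].
    have [[s1 [s1r Epx]] [s2 [s2r Eqx]]] :=
      face px qx t (conj p1 pnx) (conj q1 qnx) t01 (ex_intro _ s (conj s01 Ex)).
    have sw : supp (s *: y + (1 - s) *: z) \subset supp y.
      exact: subset_trans (supp_comb2 _ _ _) syz.
    split.
    * exists s1; split => //; rewrite !scale_col_mx add_col_mx -Epx; congr col_mx.
      apply: (keyU VS Sp).
      - by rewrite Epx; apply: S3_conv.
      - by apply: subset_trans sw; rewrite -Ey; apply: supp_comb.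
      - exact: subset_trans (supp_comb2 _ _ _) syz.
    * exists s2; split => //; rewrite !scale_col_mx add_col_mx -Eqx; congr col_mx.
      apply: (keyU VS Sq).
      - by rewrite Eqx; apply: S3_conv.
      - by apply: subset_trans sw; rewrite -Ey; apply: supp_comb'.
      - exact: subset_trans (supp_comb2 _ _ _) syz.
Qed.
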